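(* Let $\widetilde\Delta^{m-1}$ be the last matrix produced by the Row Cancellation Algorithm applied to a connection matrix $\Delta\in\mathbb F^{m\times m}$. Then $\widetilde\Delta^{m-1}_{\cdot j}\,\widetilde\Delta^{m-1}_{j\cdot}=0$ (outer product) for every $j$; i.e. if the $j$-th column of $\widetilde\Delta^{m-1}$ is nonzero then its $j$-th row is zero.
   Context: Throughout, $\mathbb F$ is a field and $m\ge1$. $A_{i\cdot}$, $A_{\cdot j}$ are the $i$-th row and $j$-th column of $A$. $U^{pq}$ is the $m\times m$ matrix whose only nonzero entry is a $1$ in position $(p,q)$. Superscripts on matrices are indices, not powers. A connection matrix (over $\mathbb F$) is a matrix $\Delta\in\mathbb F^{m\times m}$ together with a partition $\{1,\dots,m\}=J_0\sqcup\cdots\sqcup J_b$ (the column/row partition; the $J_k$ need not consist of consecutive integers) such that $\Delta$ is upper triangular, $\Delta\Delta=0$, and $\Delta_{ij}=0$ unless $i<j$ and $(i,j)\in\bigcup_{k=1}^bJ_{k-1}\times J_k$. For $1\le r\le m-1$ the $r$-th diagonal is $\{(j-r,j):r<j\le m\}$. Row Cancellation Algorithm (RCA) applied to a connection matrix $\Delta$: set $\widetilde\Delta^0=\widetilde\Delta^1=\Delta$. For $r=1,\dots,m-1$ in turn: (Markup) mark permanently as a primary pivot every position $(j-r,j)$ on the $r$-th diagonal with $\widetilde\Delta^r_{j-r,j}\ne0$ such that no position of column $j$ was marked as a primary pivot at an earlier iteration. (Update, only for $r\le m-2$) If no position was marked at iteration $r$, put $\widetilde T^r=I$; otherwise let $j_1<\cdots<j_t$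 be the columns of the positions marked at iteration $r$, let $\widetilde T^{r,s}=I-\sum_{q=j_s+1}^m\frac{\widetilde\Delta^r_{j_s-r,q}}{\widetilde\Delta^r_{j_s-r,j_s}}U^{j_sq}$ and $\widetilde T^r=\widetilde T^{r,1}\cdots\widetilde T^{r,t}$. Set $\widetilde\Delta^{r+1}=(\widetilde T^r)^{-1}\widetilde\Delta^r\widetilde T^r$. *)

(* Defs.v *)
(* Indices are 0-based: 'I_m = {0,...,m-1} stands for {1,...,m}. *)
From HB Require Import structures.
From mathcomp Require Import all_boot all_order all_algebra.
Set Implicit Arguments. Unset Strict Implicit. Unset Printing Implicit Defensive.
Import Order.TTheory GRing.Theory Num.Theory.
Local Open Scope ring_scope.

Section RCA.
Variables (F : fieldType) (m : nat).

(* Connection matrix: the partition J_0 ⊔ ... ⊔ J_b is given by a labelling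
   lab : 'I_m -> 'I_b.+1, with J_k = lab^{-1}(k). *)
Definition is_connection_matrix (b : nat) (lab : 'I_m -> 'I_b.+1) (D : 'M[F]_m) : Prop :=
  [/\ (forall i j : 'I_m, (j < i)%N -> D i j = 0),
      D *m D = 0 &
      (forall i j : 'I_m, D i j != 0 -> (i < j)%N /\ val (lab j) = (val (lab i)).+1)].

Definition subord (j : 'I_m) (r : nat) : 'I_m :=
  Ordinal (leq_ltn_trans (leq_subr r j) (ltn_ord j)).

(* columns marked as primary pivots at iteration r, given the current matrix D
   and the set S of columns already holding a primary pivot *)
Definition new_marks (r : nat) (D : 'M[F]_m) (S : {set 'I_m}) : {set 'I_m} :=
  [set j : 'I_m | [&& (r <= j)%N, D (subord j r) j != 0 & j \notin S]].

Definition Umx (p q : 'I_m) : 'M[F]_m := \matrix_(i, k) ((i == p) && (k == q))%:R.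

Definition Trs (r : nat) (D : 'M[F]_m) (js : 'I_m) : 'M[F]_m :=
  1%:M - \sum_(q : 'I_m | (js < q)%N)
            (D (subord js r) q / D (subord js r) js) *: Umx js q.

Definition Tr (r : nat) (D : 'M[F]_m) (N : {set 'I_m}) : 'M[F]_m :=
  foldr (fun A B => A *m B) 1%:M [seq Trs r D j | j <- [seq j <- enum 'I_m | j \in N]].

Definition rca_step (r : nat) (st : {set 'I_m} * 'M[F]_m) : {set 'I_m} * 'M[F]_m :=
  let: (S0, D) := st in
  let N := new_marks r D S0 in
  let T := Tr r D N in
  (S0 :|: N, invmx T *m D *m T).

(* rca_state D k = (marked columns, \widetilde\Delta^{k+1}) after iterations 1..k *)
Fixpoint rca_state (D : 'M[F]_m) (k : nat) : {set 'I_m} * 'M[F]_m :=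
  match k with
  | 0 => (set0, D)
  | k'.+1 => rca_step k (rca_state D k')
  end.

(* \widetilde\Delta^{m-1}: updates are performed for r = 1, ..., m-2 *)
Definition rca_last (D : 'M[F]_m) : 'M[F]_m := (rca_state D (m - 2)).2.

End RCA.

(* Main.v *)
Require Import Defs.
From HB Require Import structures.
From mathcomp Require Import all_boot all_order all_algebra zify.
Import Order.TTheory GRing.Theory Num.Theory.
Local Open Scope ring_scope.
Set Implicit Arguments. Unset Strict Implicit. Unset Printing Implicit Defensive.

Section Proofs.
Variables (F : fieldType) (m : nat).
Implicit Types (A B D M X U T : 'M[F]_m) (S N : {set 'I_m}).

Lemma TrsE r D0 (j a k : 'I_m) : Trs r D0 j a k =
  (a == k)%:R - (if (a == j) && (j < k)%N then D0 (subord j r) k / D0 (subord j r) j else 0).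
Proof.
rewrite /Trs !mxE summxE; congr (_ - _).
under eq_bigr => q _ do rewrite !mxE.
case: ifP => [/andP[/eqP-> jk]|H].
  rewrite (bigD1 k) //= !eqxx mulr1 big1 ?addr0 // => q /andP[_ /negbTE qk].
  by rewrite eq_sym qk andbF mulr0.
apply: big1 => q jq.
case: (boolP ((a == j) && (k == q))) => [/andP[/eqP aj /eqP kq]|]; last by rewrite mulr0.
by rewrite aj eqxx kq jq in H.
Qed.


Definition utri (A : 'M[F]_m) := (forall i k : 'I_m, (k < i)%N -> A i k = 0) /\ (forall i, A i i = 1).

Lemma utri_mul A B : utri A -> utri B -> utri (A *m B).
Proof.
move=> [A0 A1] [B0 B1]; split=> [i k ki|i]; rewrite !mxE.
  apply: big1 => l _; case: (ltnP l i) => [li|il]; first by rewrite A0 ?mul0r.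
  by rewrite B0 ?mulr0 //; apply: leq_trans ki il.
rewrite (bigD1 i) //= A1 B1 mulr1 big1 ?addr0 // => l li.
case: (ltngtP l i) => [lt|gt|/val_inj eq]; first by rewrite A0 ?mul0r.
  by rewrite B0 ?mulr0.
by rewrite eq eqxx in li.
Qed.

Lemma utri1 : utri 1%:M.
Proof. by split=> [i k ki|i]; rewrite !mxE ?eqxx //; case: eqP => [ik|] //; rewrite ik ltnn in ki. Qed.

Lemma utri_unit A : utri A -> A \in unitmx.
Proof.
move=> [A0 A1]; rewrite unitmxE -det_tr det_trig.
  by rewrite big1 ?unitr1 // => i _; rewrite mxE A1.
by apply/is_trig_mxP => i j ij; rewrite mxE A0.
Qed.

Lemma utri_Trs r D0 j : utri (Trs r D0 j).
Proof.
split=> [i k ki|i]; rewrite TrsE.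
  case: eqP => [ik|_]; first by rewrite ik ltnn in ki.
  case: (i =P j) => [ij|] /=; last by rewrite subr0.
  by rewrite -ij ltnNge (ltnW ki) /= subr0.
by rewrite eqxx; case: (i =P j) => [->|] /=; rewrite ?ltnn subr0.
Qed.

Definition TL r D0 (s : seq 'I_m) : 'M[F]_m :=
  foldr (fun A B => A *m B) 1%:M [seq Trs r D0 j | j <- s].

Lemma utri_TL r D0 s : utri (TL r D0 s).
Proof. by elim: s => [|j s IH] /=; [exact: utri1 | exact: utri_mul (utri_Trs _ _ _) IH]. Qed.

Lemma mul_rowdelta A B (i k : 'I_m) : (forall l, A i l = (i == l)%:R) -> (A *m B) i k = B i k.
Proof.
move=> Ai; rewrite mxE (bigD1 i) //= Ai eqxx mul1r big1 ?addr0 // => l li.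
by rewrite Ai eq_sym (negbTE li) mul0r.
Qed.

Lemma TL_row r D0 s (i : 'I_m) : i \notin s -> forall k, TL r D0 s i k = (i == k)%:R.
Proof.
elim: s => [|j s IH] /=; first by move=> _ k; rewrite mxE.
rewrite inE negb_or => /andP[ij iS] k.
rewrite mul_rowdelta ?IH // => l; rewrite TrsE (negbTE ij) /= subr0 //.
Qed.


Lemma mulTrsE X r D0 (j i k : 'I_m) : (X *m Trs r D0 j) i k =
  X i k - (if (j < k)%N then D0 (subord j r) k / D0 (subord j r) j * X i j else 0).
Proof.
rewrite mxE.
under eq_bigr => l _ do rewrite TrsE mulrBr.
rewrite sumrB; congr (_ - _).
  rewrite (bigD1 k) //= eqxx mulr1 big1 ?addr0 // => l lk.
  by rewrite (negbTE lk) mulr0.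
rewrite (bigD1 j) //= eqxx /= big1 ?addr0 => [|l lj]; last by rewrite (negbTE lj) mulr0.
by case: ifP; rewrite ?mulr0 // mulrC.
Qed.

Lemma TL_clear r D0 (s : seq 'I_m) :
  sorted (fun a b : 'I_m => (a < b)%N) s ->
  (forall j, j \in s -> D0 (subord j r) j != 0) ->
  (forall j j', j \in s -> j' \in s -> (j' < j)%N -> D0 (subord j r) j' = 0) ->
  forall j, j \in s -> forall q : 'I_m, (j < q)%N -> (D0 *m TL r D0 s) (subord j r) q = 0.
Proof.
elim: s => [//|j1 s IH] /= srt nz lo.
have srt' : sorted (fun a b : 'I_m => (a < b)%N) s by exact: path_sorted srt.
have allgt : all (fun b : 'I_m => (j1 < b)%N) s.
  by apply: (order_path_min _ srt) => a b c; apply: ltn_trans.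
move=> j; rewrite inE => /orP[/eqP->|js] q j1q; rewrite mulmxA.
  set X := D0 *m Trs r D0 j1.
  rewrite mxE big1 // => k _.
  case: (ltnP j1 k) => [j1k|kj1].
    rewrite mulTrsE j1k mulfVK ?subrr ?mul0r //.
    by apply: nz; rewrite inE eqxx.
  rewrite TL_row ?mulr0; last first.
    apply/negP => ks; move/allP: allgt => /(_ k ks); rewrite ltnNge kj1 //.
  case: eqP => [kq|]; last by rewrite mulr0.
  by rewrite kq in kj1; move: (leq_trans j1q kj1); rewrite ltnn.
have j1j : (j1 < j)%N by move/allP: allgt => /(_ j js).
rewrite -(IH srt' _ _ j js q j1q); last first.
- by move=> a b aS bS; apply: lo; rewrite inE ?aS ?bS orbT.
- by move=> a aS; apply: nz; rewrite inE aS orbT.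
rewrite !mxE; apply: eq_bigr => k _; congr (_ * _).
rewrite mulTrsE; case: ifP => _; last by rewrite subr0.
by rewrite (lo j j1) ?mulr0 ?subr0 // inE ?eqxx ?js ?orbT.
Qed.


Definition Ainv r S D := forall l : 'I_m, l \notin S -> forall i : 'I_m, (l < i + r)%N -> D i l = 0.
Definition Binv S D (p : 'I_m -> 'I_m) :=
  forall j, j \in S -> D (p j) j != 0 /\ forall i : 'I_m, (p j < i)%N -> D i j = 0.
Definition Rinv r S (p : 'I_m -> 'I_m) := forall j, j \in S -> (j < p j + r)%N.
Definition Dinv S (p : 'I_m -> 'I_m) := {in S &, injective p}.
Definition Cinv S D (p : 'I_m -> 'I_m) :=
  forall j, j \in S -> forall q : 'I_m, (j < q)%N -> D (p j) q = 0.

Definition Inv r S D := D *m D = 0 /\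
  exists p, [/\ Ainv r S D, Binv S D p, Rinv r S p, Dinv S p & Cinv S D p].

Lemma Elem r S D p : D *m D = 0 -> Ainv r S D -> Binv S D p -> Rinv r S p -> Dinv S p ->
  Cinv S D p -> forall j, j \in S -> forall k, D j k = 0.
Proof.
move=> DD0 HA HB HR HD HC j jS k; apply/eqP; apply: contraT => Djk.
pose P := [pred l : 'I_m | (l \in S) && (D l k != 0)].
have Pj : P j by rewrite inE /= jS Djk.
case: (@arg_maxnP _ j P (fun l => val (p l)) Pj) => ls /andP[lsS lsk] maxl.
have : (D *m D) (p ls) k = 0 by rewrite DD0 mxE.
rewrite mxE (bigD1 ls) //= big1 ?addr0 => [/eqP|l lls].
  by rewrite mulf_eq0 (negbTE (HB ls lsS).1) (negbTE lsk).
case: (D l k =P 0) => [->|/eqP Dlk]; first by rewrite mulr0.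
rewrite [D _ l](_ : _ = 0) ?mul0r //.
case: (boolP (l \in S)) => lS.
  have le : (p l <= p ls)%N by apply: (maxl l); rewrite inE /= lS Dlk.
  apply: (HB l lS).2; rewrite ltn_neqAle le andbT.
  apply: contra lls => /eqP pe; apply/eqP; apply: HD => //; exact: val_inj.
case: (ltngtP l ls) => [lt|gt|eq].
- by apply: (HA l lS); apply: ltn_trans lt (HR ls lsS).
- exact: HC.
- by move/val_inj: eq lls => ->; rewrite eqxx.
Qed.


Lemma memN r D S (j : 'I_m) :
  (j \in new_marks r D S) = [&& (r <= j)%N, D (subord j r) j != 0 & j \notin S].
Proof. by rewrite inE. Qed.

Lemma subordE (j : 'I_m) r : val (subord j r) = (j - r)%N.
Proof. by []. Qed.

Definition pext r D S (p : 'I_m -> 'I_m) (j : 'I_m) :=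
  if j \in new_marks r D S then subord j r else p j.

Section Markup.
Variables (r : nat) (S : {set 'I_m}) (D : 'M[F]_m) (p : 'I_m -> 'I_m).
Hypotheses (HA : Ainv r S D) (HB : Binv S D p) (HR : Rinv r S p) (HD : Dinv S p)
  (HC : Cinv S D p).
Let N := new_marks r D S.
Let p' := pext r D S p.

Lemma pextS j : j \in S -> p' j = p j.
Proof. by move=> jS; rewrite /p' /pext memN jS !andbF. Qed.

Lemma pextN j : j \in N -> p' j = subord j r.
Proof. by move=> jN; rewrite /p' /pext jN. Qed.

Lemma mk_A : Ainv r.+1 (S :|: N) D.
Proof.
move=> l; rewrite in_setU negb_or => /andP[lS lN] i lir.
case: (ltnP l (i + r)) => [lt|ge]; first exact: HA.
have eq : l = (i + r)%N :> nat by lia.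
have si : subord l r = i by apply: val_inj; rewrite subordE eq addnK.
by move: lN; rewrite memN eq leq_addl /= lS andbT si negbK => /eqP.
Qed.

Lemma mk_B : Binv (S :|: N) D p'.
Proof.
move=> j; rewrite in_setU => /orP[jS|jN]; first by rewrite pextS //; exact: HB.
move: (jN); rewrite memN => /and3P[rj Dj jS]; rewrite pextN //; split=> // i.
rewrite subordE => lt; apply: HA => //.
by rewrite -(subnK rj) ltn_add2r.
Qed.

Lemma mk_R : Rinv r.+1 (S :|: N) p'.
Proof.
move=> j; rewrite in_setU => /orP[jS|jN].
  by rewrite pextS //; have := HR jS; lia.
move: (jN); rewrite memN => /and3P[rj _ _]; rewrite pextN // subordE; lia.
Qed.

Lemma mk_Rold : Rinv r S p'.
Proof. by move=> j jS; rewrite pextS //; exact: HR. Qed.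

Lemma mk_Cold : Cinv S D p'.
Proof. by move=> j jS; rewrite pextS //; exact: HC. Qed.

Lemma mk_D : Dinv (S :|: N) p'.
Proof.
have key : forall j j', j \in S -> j' \in N -> p' j <> p' j'.
  move=> j j' jS jN; rewrite pextS // pextN // => e.
  move: (jN); rewrite memN => /and3P[rj Dj j'S].
  case: (ltngtP j j') => [lt|gt|eq].
  - by move: Dj; rewrite -e HC ?eqxx.
  - move: (HR jS); rewrite e subordE subnK //; rewrite ltnNge (ltnW gt) //.
  - by move: j'S; rewrite -(val_inj eq) jS.
move=> j j'; rewrite !in_setU => /orP[jS|jN] /orP[j'S|j'N] e.
- by apply: HD; rewrite -?pextS.
- by case: (key _ _ jS j'N).
- by case: (key _ _ j'S jN).
move: (jN) (j'N); rewrite !memN => /and3P[rj _ _] /and3P[rj' _ _].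
move: e; rewrite !pextN // => /(congr1 val); rewrite !subordE => e.
by apply: val_inj => /=; lia.
Qed.

End Markup.


Lemma utri_rowsum U X (i j : 'I_m) : utri U ->
  (forall k : 'I_m, (i < k)%N -> X k j = 0) -> (U *m X) i j = X i j.
Proof.
move=> [U0 U1] Xk; rewrite mxE (bigD1 i) //= U1 mul1r big1 ?addr0 // => k ki.
case: (ltngtP k i) => [lt|gt|/val_inj eq]; first by rewrite U0 ?mul0r.
  by rewrite Xk ?mulr0.
by rewrite eq eqxx in ki.
Qed.

Lemma solve_zero U X M (j : 'I_m) (P : nat -> bool) : utri U -> U *m X = M ->
  (forall a b, (a <= b)%N -> P a -> P b) ->
  (forall i : 'I_m, P i -> M i j = 0) -> forall i : 'I_m, P i -> X i j = 0.
Proof.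
move=> uU UX mono HM.
suff H : forall n (i : 'I_m), (m - i <= n)%N -> P i -> X i j = 0.
  by move=> i; apply: (H m); rewrite leq_subr.
elim=> [|n IH] i mi Pi.
  by have := ltn_ord i; lia.
rewrite -(@utri_rowsum U X i j uU) ?UX ?HM // => k ik.
apply: IH; first by have := ltn_ord k; lia.
by apply: mono Pi; apply: ltnW.
Qed.

Lemma solve_eq U X M (j c : 'I_m) : utri U -> U *m X = M ->
  (forall i : 'I_m, (c < i)%N -> M i j = 0) ->
  (forall i : 'I_m, (c < i)%N -> X i j = 0) /\ X c j = M c j.
Proof.
move=> uU UX HM.
have Z := solve_zero uU UX (P := fun i => (c < i)%N) (fun a b ab ca => leq_trans ca ab) HM.
by split=> //; rewrite -UX utri_rowsum.
Qed.


Lemma sorted_L (N : {set 'I_m}) :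
  sorted (fun a b : 'I_m => (a < b)%N) [seq j <- enum 'I_m | j \in N].
Proof.
apply: sorted_filter; first by move=> a b c; apply: ltn_trans.
have := iota_ltn_sorted 0 m; rewrite -val_enum_ord sorted_map.
by apply: sub_sorted.
Qed.

Lemma step r S D : Inv r S D ->
  let N := new_marks r D S in let T := Tr r D N in
  Inv r.+1 (S :|: N) (invmx T *m D *m T).
Proof.
move=> [DD0 [p [HA HB HR HD HC]]] N T.
pose p' := pext r D S p.
have PA := mk_A HA.
have PB := mk_B HA HB.
have PR : Rinv r.+1 (S :|: N) p' := mk_R HR.
have PRo : Rinv r S p' := mk_Rold D HR.
have PD : Dinv (S :|: N) p' := mk_D HR HD HC.
have PC : Cinv S D p' := mk_Cold r HC.
have Eold := Elem DD0 HA HB HR HD HC.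
set L := [seq j <- enum 'I_m | j \in N].
have memL j : (j \in L) = (j \in N) by rewrite mem_filter mem_enum andbT.
have uT : utri T := utri_TL r D L.
have unitT := utri_unit uT.
have Trow i : i \notin N -> forall k, T i k = (i == k)%:R.
  by rewrite -memL; apply: TL_row.
set M := D *m T.
have TD' : T *m (invmx T *m D *m T) = M by rewrite !mulmxA mulmxV // mul1mx.
have D'M i q : i \notin N -> (invmx T *m D *m T) i q = M i q.
  move=> iN; rewrite -mulmxA mul_rowdelta // => l.
  have := congr1 (fun A => A i l) (mulmxV unitT).
  by rewrite /= mul_rowdelta ?mxE //; apply: Trow.
have Mcol (i q : 'I_m) : (forall k, k \in N -> (k < q)%N -> D i k = 0) -> M i q = D i q.
  move=> Hk; rewrite mxE (bigD1 q) //= uT.2 mulr1 big1 ?addr0 // => k kq.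
  case: (boolP (k \in N)) => kN.
    case: (ltngtP k q) => [lt|gt|/val_inj eq]; first by rewrite Hk ?mul0r.
      by rewrite uT.1 ?mulr0.
    by rewrite eq eqxx in kq.
  by rewrite Trow // (negbTE kq) mulr0.
have rN (k : 'I_m) : k \in N -> (r <= k)%N by rewrite memN => /and3P[].
have NSN k : k \in N -> k \in S :|: N by rewrite in_setU orbC => ->.
have pN (j : 'I_m) : j \in S :|: N -> p' j \notin N.
  move=> jSN; apply/negP => nN.
  have [Dnj Bj] := PB j jSN.
  move: (nN); rewrite memN => /and3P[rn Dn nS].
  have : (D *m D) (subord (p' j) r) j = 0 by rewrite DD0 mxE.
  rewrite mxE (bigD1 (p' j)) //= big1 ?addr0 => [/eqP|l ln].
    by rewrite mulf_eq0 (negbTE Dn) (negbTE Dnj).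
  case: (D l j =P 0) => [->|/eqP Dlj]; first by rewrite mulr0.
  case: (boolP (l \in S)) => lS; first by rewrite (Eold l lS) mulr0.
  have lle : (l <= p' j)%N by rewrite leqNgt; apply: contra Dlj => /Bj/eqP.
  have llt : (l < p' j)%N by rewrite ltn_neqAle lle andbT; apply: contra ln => /eqP e; apply/eqP/val_inj.
  by rewrite HA ?mul0r // subordE; lia.
split.
  rewrite !mulmxA -(mulmxA _ T) mulmxV // mulmx1 -(mulmxA _ D D) DD0 mulmx0 mul0mx //.
exists p'; split => //.
- move=> l lSN i li.
  apply: (solve_zero uT TD' (P := fun i => (l < i + r.+1)%N)) li => [a b ab|i' Pi'].
    by lia.
  move: Pi' => /= Pi'; rewrite Mcol ?PA // => k kN kl.
  apply: (PB k (NSN k kN)).2; rewrite /p' pextN // subordE. have := rN k kN; lia.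
- move=> j jSN; have [Bj1 Bj2] := PB j jSN.
  have Mj (i : 'I_m) : (p' j <= i)%N -> M i j = D i j.
    move=> ji; apply: Mcol => k kN kj.
    apply: (PB k (NSN k kN)).2; rewrite /p' pextN // subordE.
    by move: (PR j jSN) (rN k kN) kj ji; rewrite /p'; lia.
  have [Z E] := solve_eq (c := p' j) (j := j) uT TD' (fun i ji => etrans (Mj i (ltnW ji)) (Bj2 i ji)).
  by split; [rewrite E Mj | exact: Z].
- move=> j jSN q jq; rewrite D'M ?pN //.
  move: jSN; rewrite in_setU => /orP[jS|jN].
    rewrite Mcol; first by apply: PC.
    move=> k kN kq.
    case: (ltngtP j k) => [lt|gt|/val_inj eq].
    + by apply: PC.
    + apply: (PB k (NSN k kN)).2; rewrite /p' pextN // subordE.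
      by move: (PRo j jS) (rN k kN) gt; rewrite /p'; lia.
    + by move: kN; rewrite memN -eq jS !andbF.
  rewrite /p' pextN //; apply: TL_clear => //.
  + exact: sorted_L.
  + by move=> a; rewrite memL memN => /and3P[].
  + move=> a b; rewrite !memL => aN bN ba.
    apply: (PB b (NSN b bN)).2; rewrite /p' !pextN // !subordE.
    by move: aN bN; rewrite !memN => /and3P[ra _ _] /and3P[rb _ _]; lia.
  + by rewrite memL.
Qed.


Lemma inv_init b (lab : 'I_m -> 'I_b.+1) D : is_connection_matrix lab D -> Inv 1 set0 D.
Proof.
move=> [_ DD0 HC]; split=> //; exists id; split => //.
- move=> l _ i li; apply/eqP; apply: contraT => /HC [il _].
  by move: li; rewrite addn1 ltnS leqNgt il.
all: by move=> ?; rewrite in_set0.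
Qed.

Lemma inv_state b (lab : 'I_m -> 'I_b.+1) D : is_connection_matrix lab D ->
  forall k, Inv k.+1 (rca_state D k).1 (rca_state D k).2.
Proof.
move=> cD; elim=> [|k IH]; first exact: inv_init cD.
rewrite [rca_state D k.+1]/=; case: (rca_state D k) IH => S0 D0 IH /=.
exact: step IH.
Qed.

Lemma final_inv r S D : Inv r S D -> (m <= r.+1)%N ->
  forall j : 'I_m, (forall a : 'I_m, D a j = 0) \/ (forall b : 'I_m, D j b = 0).
Proof.
move=> [DD0 [p [HA HB HR HD HC]]] rm j.
pose N := new_marks r D S.
pose p' := pext r D S p.
have PA := mk_A HA.
have PB := mk_B HA HB.
have PR : Rinv r.+1 (S :|: N) p' := mk_R HR.
have PD : Dinv (S :|: N) p' := mk_D HR HD HC.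
have PC : Cinv S D p' := mk_Cold r HC.
have PC' : Cinv (S :|: N) D p'.
  move=> l; rewrite in_setU => /orP[lS|lN]; first exact: PC.
  move=> q lq; move: lN; rewrite memN => /and3P[rl _ _].
  by have := ltn_ord q; lia.
case: (boolP (j \in S :|: N)) => jSN.
  by right; apply: (Elem DD0 PA PB PR PD PC').
left => a; apply: PA => //; have := ltn_ord j; lia.
Qed.

End Proofs.

Theorem mainTheorem12 (F : fieldType) (m : nat) (hm : (1 <= m)%N)
  (b : nat) (lab : 'I_m -> 'I_b.+1) (Delta : 'M[F]_m) :
  is_connection_matrix lab Delta ->
  forall j : 'I_m, col j (rca_last Delta) *m row j (rca_last Delta) = 0.
Proof.
move=> cD j.
have := inv_state cD (m - 2); rewrite -/(rca_last Delta) => I.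
have [Hc|Hr] := final_inv I ltac:(lia) j.
  by apply/matrixP => a c; rewrite !mxE big_ord1 !mxE Hc mul0r.
by apply/matrixP => a c; rewrite !mxE big_ord1 !mxE Hr mulr0.
Qed.
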